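(* Let $G$ be a finitely generated group, let $N_1,N_2$ be normal subgroups of $G$ such that every element of $N_1$ commutes with every element of $N_2$, let $\Gamma_i=G/N_i$ ($i=1,2$), let $Q=G/N_1N_2$, and let $S$ be a non-abelian finite simple group. Then $$|\mathrm{Epi}(G,S)|=|\mathrm{Epi}(\Gamma_1,S)|+|\mathrm{Epi}(\Gamma_2,S)|-|\mathrm{Epi}(Q,S)|.$$
   Context: For a group $G$ and finite group $S$, $\mathrm{Epi}(G,S)$ denotes the set of surjective homomorphisms $G\to S$ (finite when $G$ is finitely generated). *)

(* Defs.v *)
From HB Require Import structures.
From mathcomp Require Import all_boot all_fingroup all_solvable.
From Stdlib Require List.

Set Implicit Arguments.
Unset Strict Implicit.
Unset Printing Implicit Defensive.

Record AbsGroup := {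
  gcar :> Type;
  gmul : gcar -> gcar -> gcar;
  gone : gcar;
  ginv : gcar -> gcar;
  gmulA : forall x y z, gmul x (gmul y z) = gmul (gmul x y) z;
  gmul1 : forall x, gmul gone x = x;
  gmulV : forall x, gmul (ginv x) x = gone
}.

Arguments gmul {a} _ _.
Arguments gone {a}.
Arguments ginv {a} _.

Inductive generated (G : AbsGroup) (X : list G) : G -> Prop :=
| gen_one : generated X gone
| gen_in x : List.In x X -> generated X x
| gen_inv x : generated X x -> generated X (ginv x)
| gen_mul x y : generated X x -> generated X y -> generated X (gmul x y).

Definition fin_generated (G : AbsGroup) : Prop :=
  exists X : list G, forall g : G, generated X g.

Definition normal_subgroup (G : AbsGroup) (N : G -> Prop) : Prop :=
  [/\ N gone,
      (forall x y, N x -> N y -> N (gmul x y)),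
      (forall x, N x -> N (ginv x)) &
      (forall g x, N x -> N (gmul (ginv g) (gmul x g)))].

Definition prod_sub (G : AbsGroup) (N1 N2 : G -> Prop) : G -> Prop :=
  fun g => exists a b, [/\ N1 a, N2 b & g = gmul a b].

Definition epi (G : AbsGroup) (gT : finGroupType) (S : {group gT}) (f : G -> gT) : Prop :=
  [/\ (forall x y, f (gmul x y) = (f x * f y)%g),
      (forall x, f x \in S) &
      (forall s, s \in S -> exists x, f x = s)].

(* The quotient G/N has carrier G modulo
   x ~ y iff x^-1 y \in N; a map G/N -> gT is a map G -> gT constant on the
   classes, and the group law / surjectivity are inherited through the
   (surjective) projection G -> G/N. *)
Definition epi_quot (G : AbsGroup) (N : G -> Prop) (gT : finGroupType) (S : {group gT})
    (f : G -> gT) : Prop :=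
  [/\ (forall x y, N (gmul (ginv x) y) -> f x = f y),
      (forall x y, f (gmul x y) = (f x * f y)%g),
      (forall x, f x \in S) &
      (forall s, s \in S -> exists x, f x = s)].

Definition card_is (A B : Type) (P : (A -> B) -> Prop) (n : nat) : Prop :=
  exists l : list (A -> B),
    [/\ List.length l = n, List.NoDup l & forall f, P f <-> List.In f l].

(* Main.v *)
Require Import Defs.
From HB Require Import structures.
From mathcomp Require Import all_boot all_fingroup all_solvable.
From Stdlib Require Import ClassicalEpsilon FunctionalExtensionality.
From mathcomp Require Import zify.
Set Implicit Arguments. Unset Strict Implicit.

Section Abs.
Variable G : AbsGroup.
Lemma gmulVr (x : G) : gmul x (ginv x) = gone.
Proof.
have aa : gmul (gmul x (ginv x)) (gmul x (ginv x)) = gmul x (ginv x).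
  by rewrite -gmulA [gmul (ginv x) _]gmulA gmulV gmul1.
by rewrite -[LHS]gmul1 -(gmulV (gmul x (ginv x))) -gmulA aa.
Qed.
Lemma gmulr1 (x : G) : gmul x gone = x.
Proof. by rewrite -(gmulV x) gmulA gmulVr gmul1. Qed.
End Abs.

Section Hom.
Variables (G : AbsGroup) (gT : finGroupType) (f : G -> gT).
Hypothesis fM : forall x y, f (gmul x y) = (f x * f y)%g.
Lemma f1 : f gone = 1%g.
Proof.
have e := fM gone gone; rewrite gmul1 in e.
by rewrite -(mulKg (f gone) (f gone)) -e mulVg.
Qed.
Lemma fV x : f (ginv x) = (f x)^-1%g.
Proof.
have e := fM (ginv x) x; rewrite gmulV f1 in e.
by rewrite -(mulgK (f x) (f (ginv x))) -e mul1g.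
Qed.
End Hom.

Definition asb (P : Prop) : bool := if excluded_middle_informative P then true else false.
Lemma asbP (P : Prop) : reflect P (asb P).
Proof. rewrite /asb; case: excluded_middle_informative => h; by constructor. Qed.

Definition kills (G : AbsGroup) (gT : finGroupType) (N : G -> Prop) (f : G -> gT) :=
  forall n, N n -> f n = 1%g.

Lemma image_dich (G : AbsGroup) (gT : finGroupType) (S : {group gT}) (N : G -> Prop) f :
  epi S f -> normal_subgroup N -> simple S ->
  kills N f \/ (forall s, s \in S -> exists n, N n /\ f n = s).
Proof.
case=> fM fS fsurj [N1 NM NV NJ] simS.
pose H := [set s : gT | asb (exists n, N n /\ f n = s)].
have memH s : reflect (exists n, N n /\ f n = s) (s \in H).
  by rewrite inE; apply: asbP.
have gH : group_set H.
  apply/group_setP; split.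
    by apply/memH; exists gone; split => //; rewrite f1.
  move=> x y /memH [a [Na <-]] /memH [b [Nb <-]].
  by apply/memH; exists (gmul a b); split; [apply: NM | rewrite fM].
pose HG := Group gH.
have HS : HG \subset S.
  by apply/subsetP => x /memH [a [_ <-]].
have conjH g x : x \in H -> (x ^ f g)%g \in H.
  move=> /memH [a [Na <-]]; apply/memH; exists (gmul (ginv g) (gmul a g)).
  by split; [apply: NJ | rewrite !fM fV].
have nH : (HG <| S)%g.
  rewrite /normal HS /=; apply/subsetP => s Ss.
  have [g <-] := fsurj s Ss.
  rewrite inE; apply/subsetP => y; rewrite mem_conjg => /(conjH g).
  by rewrite conjgKV.

case/simpleP: simS => _ /(_ HG nH) [] e.
  left => n Nn; apply/set1P.
  have : f n \in HG by apply/memH; exists n.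
  by rewrite e.
right => s Ss; apply/memH; by rewrite -[H]/(gval HG) e.
Qed.

Lemma kills_or (G : AbsGroup) (gT : finGroupType) (S : {group gT}) (N1 N2 : G -> Prop) f :
  epi S f -> normal_subgroup N1 -> normal_subgroup N2 ->
  (forall a b, N1 a -> N2 b -> gmul a b = gmul b a) ->
  simple S -> ~~ abelian S -> kills N1 f \/ kills N2 f.
Proof.
move=> ef n1 n2 com simS nab.
case: (image_dich ef n1 simS) => [|s1]; first by left.
case: (image_dich ef n2 simS) => [|s2]; first by right.
case/negP: nab; apply/centsP => x Sx y Sy.
have [a [Na <-]] := s1 x Sx; have [b [Nb <-]] := s2 y Sy.
case: ef => fM _ _; by rewrite /commute -!fM com.
Qed.

Lemma epi_quotE (G : AbsGroup) (gT : finGroupType) (S : {group gT}) (N : G -> Prop) f :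
  epi_quot N S f <-> epi S f /\ kills N f.
Proof.
split.
  case=> fK fM fS fs; split; first by [].
  move=> n Nn; have e := fK gone (gmul gone n).
  rewrite fM in e; have {}e := e ltac:(by rewrite gmulA gmulV gmul1).
  by rewrite -(mulKg (f gone) (f n)) -e mulVg.
case=> [[fM fS fs] k]; split => // x y Nxy.
have := k _ Nxy; rewrite fM fV // => e.
by rewrite -(mulKVg (f x) (f y)) e mulg1.
Qed.

Lemma kills_prod (G : AbsGroup) (gT : finGroupType) (N1 N2 : G -> Prop) (f : G -> gT) :
  (forall x y, f (gmul x y) = (f x * f y)%g) -> N1 gone -> N2 gone ->
  kills (prod_sub N1 N2) f <-> kills N1 f /\ kills N2 f.
Proof.
move=> fM n1 n2; split.
  move=> k; split => n Nn; apply: k.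
    by exists n, gone; split => //; rewrite gmulr1.
  by exists gone, n; split => //; rewrite gmul1.
by case=> k1 k2 n [a [b [Na Nb ->]]]; rewrite fM k1 // k2 // mulg1.
Qed.

Lemma In_map_mem (T : eqType) B (g : T -> B) (s : seq T) t :
  t \in s -> List.In (g t) (map g s).
Proof.
elim: s => //= a s IH; rewrite in_cons => /orP [/eqP ->|h]; [by left | by right; apply: IH].
Qed.

Definition fdec (A B : Type) (f g : A -> B) : {f = g} + {f <> g} :=
  excluded_middle_informative (f = g).

Lemma map_eq_In A B (f g : A -> B) (X : seq A) x :
  map f X = map g X -> List.In x X -> f x = g x.
Proof. elim: X => //= a l IH [ea el] [<-|i] //; exact: IH. Qed.

Lemma hom_finite (G : AbsGroup) (gT : finGroupType) :
  fin_generated G -> exists U : list (G -> gT), List.NoDup U /\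
    forall f, (forall x y, f (gmul x y) = (f x * f y)%g) -> List.In f U.
Proof.
case=> X genX.
pose hom (f : G -> gT) := forall x y, f (gmul x y) = (f x * f y)%g.
pose T := ((size X).-tuple gT)%type.
pose pick (t : T) : G -> gT :=
  match excluded_middle_informative (exists f, hom f /\ map f X = val t) with
  | left h => proj1_sig (constructive_indefinite_description _ h)
  | right _ => fun _ => 1%g end.
exists (List.nodup (@fdec G gT) (map pick (enum {: (size X).-tuple gT}))); split; first exact: List.NoDup_nodup.
move=> f hf; apply/List.nodup_In.
have sz : size (map f X) == size X by rewrite size_map.
have -> : f = pick (Tuple sz).
  rewrite /pick; case: excluded_middle_informative => [h|[]]; last by exists f.
  case: constructive_indefinite_description => g [hg eg] /=.
  apply: functional_extensionality => y.
  have eX : forall x, List.In x X -> f x = g x.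
    by move=> x; apply: map_eq_In; rewrite /= in eg; rewrite eg.
  elim: (genX y) => [|x /eX //|x _ e|x z _ e1 _ e2].
  - by rewrite (f1 hf) (f1 hg).
  - by rewrite (fV hf) (fV hg) e.
  - by rewrite hf hg e1 e2.
apply: In_map_mem; exact: mem_enum.
Qed.

Lemma card_filter A B (P : (A -> B) -> Prop) (U : list (A -> B)) :
  List.NoDup U -> (forall f, P f -> List.In f U) ->
  card_is P (List.length (List.filter (fun f => asb (P f)) U)).
Proof.
move=> nd inU; exists (List.filter (fun f => asb (P f)) U); split => //.
  exact: List.NoDup_filter.
move=> f; rewrite List.filter_In; split.
  by move=> Pf; split; [apply: inU | apply/asbP].
by case=> _ /asbP.
Qed.

Lemma count4 T (a b c d : T -> bool) (U : list T) :
  (forall f, a f + d f = b f + c f) ->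
  List.length (List.filter a U) + List.length (List.filter d U) =
  List.length (List.filter b U) + List.length (List.filter c U).
Proof.
move=> h; elim: U => //= x U IH; have := h x.
case: (a x); case: (b x); case: (c x); case: (d x) => //= e; lia.
Qed.

Theorem mainTheorem4 (G : AbsGroup) (gT : finGroupType) (S : {group gT})
    (N1 N2 : G -> Prop) :
  fin_generated G ->
  normal_subgroup N1 -> normal_subgroup N2 ->
  (forall a b, N1 a -> N2 b -> gmul a b = gmul b a) ->
  simple S -> ~~ abelian S ->
  exists n n1 n2 nq : nat,
    [/\ card_is (@epi G gT S) n,
        card_is (epi_quot N1 S) n1,
        card_is (epi_quot N2 S) n2,
        card_is (epi_quot (prod_sub N1 N2) S) nq &
        n + nq = n1 + n2].
Proof.
move=> fg hn1 hn2 com simS nab.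
have [U [nd inU]] := hom_finite gT fg.
have inE' : forall (P : (G -> gT) -> Prop), (forall f, P f -> epi S f) ->
    forall f, P f -> List.In f U.
  by move=> P hP f /hP [fM _ _]; apply: inU.
have e1 : forall f, epi_quot N1 S f -> epi S f by move=> f /epi_quotE [].
have e2 : forall f, epi_quot N2 S f -> epi S f by move=> f /epi_quotE [].
have e3 : forall f, epi_quot (prod_sub N1 N2) S f -> epi S f by move=> f /epi_quotE [].
do 4 eexists; split.
- exact: (card_filter nd (inE' _ (fun f h => h))).
- exact: (card_filter nd (inE' _ e1)).
- exact: (card_filter nd (inE' _ e2)).
- exact: (card_filter nd (inE' _ e3)).
apply: count4 => f.
have [n11 _ _ _] := hn1; have [n21 _ _ _] := hn2.
case: (asbP (epi S f)) => ef; last first.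
  case: (asbP (epi_quot N1 S f)) => [/e1 //|_].
  case: (asbP (epi_quot N2 S f)) => [/e2 //|_].
  by case: (asbP (epi_quot (prod_sub N1 N2) S f)) => [/e3 //|_].
have fM : forall x y, f (gmul x y) = (f x * f y)%g by case: ef.
have q1 : epi_quot N1 S f <-> kills N1 f by rewrite epi_quotE; tauto.
have q2 : epi_quot N2 S f <-> kills N2 f by rewrite epi_quotE; tauto.
have q3 : epi_quot (prod_sub N1 N2) S f <-> kills N1 f /\ kills N2 f.
  by rewrite epi_quotE -(kills_prod fM n11 n21); tauto.
have ko := kills_or ef hn1 hn2 com simS nab.
case: (asbP (epi_quot N1 S f)); case: (asbP (epi_quot N2 S f));
  case: (asbP (epi_quot (prod_sub N1 N2) S f)); rewrite q1 q2 q3; tauto.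
Qed.
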